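(* Let $\{(R_n,B_n)\}_{n=1}^\infty\subseteq\mathcal{D}_d$ and let $\nu=\delta_{R_1^{-1}B_1}*\delta_{(R_2R_1)^{-1}B_2}*\cdots*\delta_{(R_n\cdots R_1)^{-1}B_n}*\cdots$ be the corresponding infinite convolution. Then $\mathcal{Z}(\nu)=\emptyset$.
   Context: $\mathcal{D}_d$ is the set of pairs $(R,B)$ with $R=\mathrm{diag}(m_1,\dots,m_d)$, $m_1,\dots,m_d\ge2$ integers, and $B$ a nonempty subset of $\{0,\dots,m_1-1\}\times\cdots\times\{0,\dots,m_d-1\}$. For finite $A$, $\delta_A=\frac{1}{\#A}\sum_{a\in A}\delta_a$; the infinite convolution is the weak limit (which exists for sequences in $\mathcal{D}_d$) of the finite convolutions $\delta_{R_1^{-1}B_1}*\cdots*\delta_{(R_n\cdots R_1)^{-1}B_n}$. $\mathcal{Z}(\nu)=\{\xi\in\mathbb{R}^d:\widehat{\nu}(\xi+k)=0\text{ for all }k\in\mathbb{Z}^d\}$ where $\widehat{\nu}(\xi)=\int e^{-2\pi i\xi\cdot x}d\nu(x)$. *)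

(* Defs.v *)
From HB Require Import structures.
From mathcomp Require Import all_boot all_order all_algebra.
From mathcomp Require Import all_classical all_reals all_analysis.
Set Implicit Arguments. Unset Strict Implicit. Unset Printing Implicit Defensive.
Import Order.TTheory GRing.Theory Num.Theory.
Import numFieldNormedType.Exports.
Local Open Scope classical_set_scope.
Local Open Scope ring_scope.

(* Points of R^d are d-tuples of reals; [d.-tuple R] carries the product
   (= Borel) sigma-algebra of the library. *)

Definition vadd (R : realType) (d : nat) (x y : d.-tuple R) : d.-tuple R :=
  [tuple tnth x i + tnth y i | i < d].

Definition vzero (R : realType) (d : nat) : d.-tuple R := [tuple 0 | i < d].

Definition vdot (R : realType) (d : nat) (x y : d.-tuple R) : R :=
  \sum_(i < d) tnth x i * tnth y i.

(* (R_{n+1} ... R_1)^{-1} b  where R_k = diag (m (k-1) 0, ..., m (k-1) (d-1)),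
   i.e. the sequence (R_k) is indexed from 0: R_{k+1} = diag (m k). *)
Definition scaled_digit (R : realType) (d : nat) (m : nat -> 'I_d -> nat)
  (n : nat) (b : d.-tuple nat) : d.-tuple R :=
  [tuple (tnth b i)%:R / (\prod_(k < n.+1) (m k i)%:R) | i < d].

(* Integral of f against the finite convolution
     delta_{R_1^{-1} B_1} * ... * delta_{(R_n ... R_1)^{-1} B_n}
   (with B_{k+1} = B k), where delta_A is the uniform probability on the finite
   set A.  For n = 0 this is the Dirac mass at 0.  Unfolding the definition,
   the integral is the average of f (sum_k (R_k...R_1)^{-1} b_k) over all
   choices b_k in B_k; we compute it by nested averages. *)
Fixpoint fin_conv_integral (R : realType) (d : nat) (m : nat -> 'I_d -> nat)
  (B : nat -> seq (d.-tuple nat)) (n : nat) (f : d.-tuple R -> R) : R :=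
  match n with
  | 0 => f (vzero R d)
  | n'.+1 => fin_conv_integral m B n'
      (fun x => (size (B n'))%:R^-1 *
                \sum_(b <- B n') f (vadd x (scaled_digit R m n' b)))
  end.

Definition continuous_Rd (R : realType) (d : nat) (f : d.-tuple R -> R) : Prop :=
  forall (x : d.-tuple R) (e : R), 0 < e -> exists2 del : R, 0 < del &
    forall y : d.-tuple R, (forall i : 'I_d, `|tnth x i - tnth y i| < del) ->
      `|f x - f y| < e.

Definition bounded_Rd (R : realType) (d : nat) (f : d.-tuple R -> R) : Prop :=
  exists M : R, forall x, `|f x| <= M.

Definition is_infinite_convolution (R : realType) (d : nat)
  (m : nat -> 'I_d -> nat) (B : nat -> seq (d.-tuple nat))
  (nu : probability (d.-tuple R) R) : Prop :=
  forall f : d.-tuple R -> R, measurable_fun setT f -> continuous_Rd f ->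
    bounded_Rd f ->
    (fun n => fin_conv_integral m B n f) @ \oo --> Rintegral nu setT f.

(* hat nu (xi) = \int exp(-2 pi i xi.x) dnu(x) = 0, i.e. both the real part
   \int cos(2 pi xi.x) dnu and the imaginary part -\int sin(2 pi xi.x) dnu
   vanish. *)
Definition fourier_vanishes (R : realType) (d : nat)
  (nu : probability (d.-tuple R) R) (xi : d.-tuple R) : Prop :=
  Rintegral nu setT (fun x => cos (2 * pi * vdot xi x)) = 0 /\
  Rintegral nu setT (fun x => sin (2 * pi * vdot xi x)) = 0.

Definition Zset (R : realType) (d : nat) (nu : probability (d.-tuple R) R)
  : set (d.-tuple R) :=
  [set xi | forall k : d.-tuple int,
      fourier_vanishes nu (vadd xi [tuple (tnth k i)%:~R | i < d])].

(* (R_{n+1}, B_{n+1}) = (diag (m n), B n) belongs to D_d *)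
Definition in_Dd (d : nat) (mn : 'I_d -> nat) (Bn : seq (d.-tuple nat)) : Prop :=
  (forall i, (2 <= mn i)%N) /\ uniq Bn /\ Bn != [::] /\
  (forall b, b \in Bn -> forall i, (tnth b i < mn i)%N).

(* Main.v *)
Require Import Defs.
From HB Require Import structures.
From mathcomp Require Import all_boot all_order all_algebra.
From mathcomp Require Import all_classical all_reals all_analysis.
From mathcomp Require Import ring lra.
Set Implicit Arguments. Unset Strict Implicit. Unset Printing Implicit Defensive.
Import Order.TTheory GRing.Theory Num.Theory.
Import numFieldNormedType.Exports.
Local Open Scope classical_set_scope.
Local Open Scope ring_scope.
Section Trig.
Variable R : realType.
Implicit Types x y h B : R.

Lemma sinDB_cos u h : sin (u + h) - sin (u - h) = 2 * sin h * cos u.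
Proof. rewrite sinD sinB; ring. Qed.

Lemma cosBD_sin u h : cos (u - h) - cos (u + h) = 2 * sin h * sin u.
Proof. rewrite cosB cosD; ring. Qed.

Lemma tele_cos B h (M : nat) :
  2 * sin h * \sum_(s < M) cos (B + s%:R * (2 * h)) =
  sin (B + M%:R * (2 * h) - h) - sin (B - h).
Proof.
rewrite mulr_sumr.
have -> : \sum_(s < M) (2 * sin h * cos (B + s%:R * (2 * h))) =
  \sum_(0 <= s < M) (sin (B + s.+1%:R * (2 * h) - h) - sin (B + s%:R * (2 * h) - h)).
  rewrite big_mkord; apply: eq_bigr => s _.
  rewrite -sinDB_cos; congr (sin _ - sin _).
  by rewrite -natr1; ring.
rewrite telescope_sumr // mul0r addr0 //.
Qed.

Lemma sin_periodn a (n : nat) : sin (a + 2 * pi * n%:R) = sin a :> R.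
Proof. rewrite mulr_natr mulr_natl; exact: (periodicn (@sinD2pi R)). Qed.

Lemma sin_periodNn a (n : nat) : sin (a - 2 * pi * n%:R) = sin a :> R.
Proof. by rewrite -[in RHS](subrK (2 * pi * n%:R) a) sin_periodn. Qed.

Lemma cos_periodn a (n : nat) : cos (a + 2 * pi * n%:R) = cos a :> R.
Proof. rewrite mulr_natr mulr_natl; exact: (periodicn (@cosD2pi R)). Qed.

Lemma cos_periodNn a (n : nat) : cos (a - 2 * pi * n%:R) = cos a :> R.
Proof. by rewrite -[in RHS](subrK (2 * pi * n%:R) a) cos_periodn. Qed.

Lemma sin_ne0_frac (j j' M : nat) : j != j' -> (j < M)%N -> (j' < M)%N ->
  sin (pi * (j%:R - j'%:R) / M%:R) != 0 :> R.
Proof.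
move=> jj' jM j'M.
have M0 : (0 < M%:R :> R) by rewrite ltr0n; apply: leq_ltn_trans jM.
wlog lt : j j' jj' jM j'M / (j' < j)%N.
  move=> H; case: (ltngtP j' j) => [h|h|h]; first exact: H.
  - rewrite -opprB mulrN mulNr sinN oppr_eq0; apply: H => //.
    by rewrite eq_sym.
  - by move: jj'; rewrite h eqxx.
have pos : 0 < (j%:R - j'%:R : R) by rewrite subr_gt0 ltr_nat.
rewrite gt_eqF // sin_gt0_pi //; apply/andP; split.
  by rewrite divr_gt0 // mulr_gt0 // pi_gt0.
rewrite ltr_pdivrMr // mulrC [pi * _]mulrC ltr_pM2r ?pi_gt0 //.
rewrite ltrBlDr; apply: (lt_le_trans (y := M%:R)); first by rewrite ltr_nat.
by rewrite lerDl ler0n.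
Qed.

Lemma alias_cos B (M j j' : nat) : j != j' -> (j < M)%N -> (j' < M)%N ->
  \sum_(s < M) cos (B + s%:R * (2 * (- (pi * (j%:R - j'%:R) / M%:R)))) = 0 :> R.
Proof.
move=> jj' jM j'M.
set h := - (pi * (j%:R - j'%:R) / M%:R).
have M0 : (M%:R != 0 :> R) by rewrite pnatr_eq0 -lt0n; apply: leq_ltn_trans jM.
have sh : 2 * sin h != 0.
  by rewrite mulf_eq0 negb_or pnatr_eq0 /= /h sinN oppr_eq0 sin_ne0_frac.
have E : 2 * sin h * \sum_(s < M) cos (B + s%:R * (2 * h)) = 0.
  rewrite tele_cos.
  have -> : B + M%:R * (2 * h) - h = (B - h) + 2 * pi * j'%:R - 2 * pi * j%:R.
    rewrite /h; field; exact: M0.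
  by rewrite sin_periodNn sin_periodn subrr.
by move/eqP: E; rewrite mulf_eq0 (negbTE sh) /= => /eqP.
Qed.
Lemma tele_sin B h (M : nat) :
  2 * sin h * \sum_(s < M) sin (B + s%:R * (2 * h)) =
  cos (B - h) - cos (B + M%:R * (2 * h) - h).
Proof.
rewrite mulr_sumr.
have -> : \sum_(s < M) (2 * sin h * sin (B + s%:R * (2 * h))) =
  - \sum_(0 <= s < M) (cos (B + s.+1%:R * (2 * h) - h) - cos (B + s%:R * (2 * h) - h)).
  rewrite big_mkord -sumrN; apply: eq_bigr => s _.
  rewrite -cosBD_sin opprB; congr (cos _ - cos _).
  by rewrite -natr1; ring.
by rewrite telescope_sumr // mul0r addr0 opprB.
Qed.

Definition Csum (K : nat) (phi : R) := \sum_(j < K.+1) cos (j%:R * phi).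
Definition Ssum (K : nat) (phi : R) := \sum_(j < K.+1) sin (j%:R * phi).

Lemma ker_bound K phi : (Csum K phi ^+ 2 + Ssum K phi ^+ 2) * (1 - cos phi) <= 2.
Proof.
set h := phi / 2.
have ph : phi = 2 * h by rewrite /h; field.
set A := K.+1%:R * (2 * h) - h.
have e1 : 2 * sin h * Csum K phi = sin A + sin h.
  have := tele_cos 0 h K.+1.
  have -> : \sum_(s < K.+1) cos (0 + s%:R * (2 * h)) = Csum K phi.
    by rewrite /Csum ph; apply: eq_bigr => j _; rewrite add0r.
  by rewrite !add0r sinN opprK.
have e2 : 2 * sin h * Ssum K phi = cos h - cos A.
  have := tele_sin 0 h K.+1.
  have -> : \sum_(s < K.+1) sin (0 + s%:R * (2 * h)) = Ssum K phi.
    by rewrite /Ssum ph; apply: eq_bigr => j _; rewrite add0r.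
  by rewrite !add0r cosN.
have e3 : cos phi = 1 - 2 * sin h ^+ 2.
  have -> : phi = h + h by rewrite /h; field.
  rewrite cosD.
  have := cos2Dsin2 h; rewrite !expr2 => H; lra.
have e4 : (sin A + sin h) ^+ 2 + (cos h - cos A) ^+ 2 <= 4.
  have hA := cos2Dsin2 A; have hh := cos2Dsin2 h.
  have hc := cos_geN1 (A + h); rewrite cosD in hc.
  rewrite !expr2 in hA hh *; nra.
have -> : (Csum K phi ^+ 2 + Ssum K phi ^+ 2) * (1 - cos phi) =
  ((2 * sin h * Csum K phi) ^+ 2 + (2 * sin h * Ssum K phi) ^+ 2) / 2.
  by rewrite e3; field.
rewrite e1 e2; lra.
Qed.

Lemma dsum_cos K phi :
  \sum_(j < K.+1) \sum_(j' < K.+1) cos ((j%:R - j'%:R) * phi) =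
  Csum K phi ^+ 2 + Ssum K phi ^+ 2.
Proof.
rewrite /Csum /Ssum !expr2 !big_distrl /= -big_split /=; apply: eq_bigr => j _.
rewrite !big_distrr /= -big_split /=; apply: eq_bigr => j' _.
by rewrite mulrBl cosB.
Qed.
Lemma cos_le_half u v : 0 <= u <= v -> v <= 1/2 -> cos (2 * pi * v) <= cos (2 * pi * u) :> R.
Proof.
move=> /andP[u0 uv] v2.
have pi0 := pi_gt0 R.
have inI (w : R) : 0 <= w <= 1/2 -> 2 * pi * w \in `[0, pi].
  move=> /andP[w0 w1]; rewrite in_itv /=; apply/andP; split.
    by rewrite mulr_ge0 // mulr_ge0 // ltW.
  nra.
case: (ltgtP u v) uv => // [uv _|-> _]; last by [].
apply: ltW; rewrite ltr_cos ?inI //; first by rewrite ltr_pM2l // mulr_gt0.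
- by rewrite u0 (le_trans (ltW uv)).
- by rewrite v2 (le_trans u0 (ltW uv)).
Qed.

Lemma cos_far (eta y : R) : 0 < eta -> eta <= `|y| -> `|y| <= 1 - eta ->
  cos (2 * pi * y) <= cos (2 * pi * eta).
Proof.
move=> e0 ey ye.
have -> : cos (2 * pi * y) = cos (2 * pi * `|y|).
  case: (ler0P y) => _; last by [].
  by rewrite mulrN cosN.
case: (lerP `|y| (1/2)) => yh.
  by apply: cos_le_half => //; rewrite (ltW e0).
rewrite -(cos_periodNn _ 1) (_ : 2 * pi * `|y| - 2 * pi * 1%:R = - (2 * pi * (1 - `|y|))); last by ring.
rewrite cosN; apply: cos_le_half; first by rewrite (ltW e0) /= lerBrDl -lerBrDr.
lra.
Qed.

Lemma one_cos_gt0 (eta : R) : 0 < eta <= 1/2 -> 0 < 1 - cos (2 * pi * eta).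
Proof.
move=> /andP[e0 e2]; rewrite subr_gt0.
have pi0 := pi_gt0 R.
rewrite -{2}cos0 ltr_cos //; first by rewrite mulr_gt0 // mulr_gt0.
- rewrite in_itv /= lexx; exact: ltW.
- rewrite in_itv /=; apply/andP; split; first by rewrite ltW // mulr_gt0 // mulr_gt0.
  nra.
Qed.
End Trig.
Section FCI.
Variables (R : realType) (d : nat) (m : nat -> 'I_d -> nat) (B : nat -> seq (d.-tuple nat)).
Hypothesis HD : forall n, in_Dd (m n) (B n).

Notation fci := (@fin_conv_integral R d m B).

Lemma fci_ext n f g : f =1 g -> fci n f = fci n g.
Proof. by move=> fg; congr (fci n _); apply: funext. Qed.

Lemma fci_sum (I : Type) (r : seq I) n (f : I -> d.-tuple R -> R) :
  fci n (fun x => \sum_(j <- r) f j x) = \sum_(j <- r) fci n (f j).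
Proof.
elim: n f => [//|n IH] f /=.
rewrite -IH; apply: fci_ext => x.
rewrite exchange_big /= mulr_sumr //.
Qed.

Lemma sum_cst_seq (T : Type) (s : seq T) (c : R) : \sum_(b <- s) c = c * (size s)%:R.
Proof.
elim: s => [|x s IH]; first by rewrite big_nil mulr0.
by rewrite big_cons IH /= -natr1 mulrDr mulr1 addrC.
Qed.

Lemma fci_cst n c : fci n (fun=> c) = c.
Proof.
elim: n c => [//|n IH] c /=.
rewrite (_ : (fun x => _) = fun=> c) ?IH //; apply: funext => x.
rewrite sum_cst_seq mulrCA mulVf ?mulr1 //.
case: (HD n) => _ [_ [Bn _]]; rewrite pnatr_eq0 size_eq0 //.
Qed.

Variable i : 'I_d.

Definition Pr (k : nat) : R := \prod_(j < k) (m j i)%:R.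

Lemma m_ge2 k : (2 <= m k i)%N.
Proof. by case: (HD k) => H _; apply: H. Qed.

Lemma Pr_gt0 k : 0 < Pr k.
Proof.
rewrite /Pr; apply: prodr_gt0 => j _; rewrite ltr0n.
by apply: leq_trans (m_ge2 j).
Qed.

Lemma PrS k : Pr k.+1 = Pr k * (m k i)%:R.
Proof. by rewrite /Pr big_ord_recr. Qed.

Lemma PrV k : (Pr k)^-1 = (m k i)%:R * (Pr k.+1)^-1.
Proof.
rewrite PrS invfM mulrCA mulfV ?mulr1 //.
by rewrite pnatr_eq0 -lt0n (leq_trans _ (m_ge2 k)).
Qed.

Lemma tnth_sd k b : tnth (scaled_digit R m k b) i = (tnth b i)%:R * (Pr k.+1)^-1.
Proof. by rewrite tnth_mktuple. Qed.

Lemma tnth_vadd (x y : d.-tuple R) : tnth (vadd x y) i = tnth x i + tnth y i.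
Proof. by rewrite tnth_mktuple. Qed.

Definition Box k (y : d.-tuple R) := 0 <= tnth y i <= 1 - (Pr k)^-1.

Lemma digit_lt k b : b \in B k -> (tnth b i < m k i)%N.
Proof. by case: (HD k) => _ [_ [_ H]] /H; apply. Qed.

Lemma Box_step k y b : Box k y -> b \in B k -> Box k.+1 (vadd y (scaled_digit R m k b)).
Proof.
rewrite /Box tnth_vadd tnth_sd => /andP[y0 y1] /digit_lt bm.
have u0 := Pr_gt0 k.+1; set u := (Pr k.+1)^-1 in y1 *.
have u0' : 0 < u by rewrite invr_gt0.
have bm' : ((tnth b i).+1)%:R <= (m k i)%:R :> R by rewrite ler_nat.
rewrite -natr1 in bm'.
have b0 : 0 <= (tnth b i)%:R :> R by [].
rewrite PrV -/u in y1.
apply/andP; split; first by rewrite addr_ge0 // mulr_ge0 // ltW.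
nra.
Qed.

Lemma Box0 : Box 0 (vzero R d).
Proof. by rewrite /Box /Pr big_ord0 invr1 subrr tnth_mktuple lexx. Qed.

Lemma sum_count (T : Type) (a : pred T) (s : seq T) :
  \sum_(b <- s) ((a b)%:R : R) = (count a s)%:R.
Proof. elim: s => [|x s IH]; first by rewrite big_nil. by rewrite big_cons IH /= natrD. Qed.

Definition rho1 j : R := (count (fun b => tnth b i == (m j i).-1) (B j))%:R / (size (B j))%:R.
Definition rho0 j : R := (count (fun b => tnth b i == 0%N) (B j))%:R / (size (B j))%:R.

Lemma avg_bound (T : eqType) (s : seq T) (F : T -> R) (a : pred T) (M : R) :
  (forall b, b \in s -> 0 <= F b /\ F b <= M * (a b)%:R) ->
  0 <= (size s)%:R^-1 * \sum_(b <- s) F b /\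
  (size s)%:R^-1 * \sum_(b <- s) F b <= M * ((count a s)%:R / (size s)%:R).
Proof.
move=> H; split.
  rewrite mulr_ge0 // big_seq sumr_ge0 // => b /H []//.
rewrite (_ : M * _ = (size s)%:R^-1 * (M * (count a s)%:R)); last by ring.
rewrite ler_wpM2l //.
rewrite -sum_count mulr_sumr big_seq [X in _ <= X]big_seq; apply: ler_sum => b /H [] //.
Qed.

Lemma avg_le (T : eqType) (s : seq T) (F : T -> R) (M : R) :
  s != [::] -> (forall b, b \in s -> 0 <= F b /\ F b <= M) ->
  0 <= (size s)%:R^-1 * \sum_(b <- s) F b /\ (size s)%:R^-1 * \sum_(b <- s) F b <= M.
Proof.
move=> s0 H.
have [] := @avg_bound T s F predT M.
  by move=> b /H; rewrite mulr1.
by rewrite count_predT mulfV ?mulr1 ?pnatr_eq0 ?size_eq0.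
Qed.

Lemma avg_0 (T : eqType) (s : seq T) (F : T -> R) :
  (forall b, b \in s -> F b = 0) -> (size s)%:R^-1 * \sum_(b <- s) F b = 0.
Proof. by move=> H; rewrite big1_seq ?mulr0. Qed.

Lemma Bne k : B k != [::].
Proof. by case: (HD k) => _ [_ []]. Qed.

Lemma rho1_ge0 j : 0 <= rho1 j. Proof. by rewrite /rho1 divr_ge0. Qed.
Lemma rho0_ge0 j : 0 <= rho0 j. Proof. by rewrite /rho0 divr_ge0. Qed.

Lemma head1 k g M : 0 <= M ->
  (forall y, Box k y -> [/\ 0 <= g y, g y <= M & (tnth y i <= 1 - 2 * (Pr k)^-1 -> g y = 0)]) ->
  fci k g <= M * \prod_(j < k) rho1 j.
Proof.
elim: k g M => [|k IH] g M M0 H.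
  by rewrite big_ord0 mulr1 /=; case: (H _ Box0).
rewrite big_ord_recr /= mulrA mulrAC; apply: IH; first by rewrite mulr_ge0 // rho1_ge0.
move=> y By.
have u0 : 0 < (Pr k.+1)^-1 by rewrite invr_gt0 Pr_gt0.
have key : forall b, b \in B k -> 0 <= g (vadd y (scaled_digit R m k b)) /\
   g (vadd y (scaled_digit R m k b)) <= M * (tnth b i == (m k i).-1)%:R.
  move=> b bB; have Bz := Box_step By bB; case: (H _ Bz) => g0 gM gz; split => //.
  case: eqP => [_|ne]; first by rewrite mulr1.
  rewrite mulr0 gz //; rewrite tnth_vadd tnth_sd.
  have bm := digit_lt bB.
  have bm2 : ((tnth b i).+2 <= m k i)%N.
    by rewrite ltn_neqAle bm andbT; apply/eqP => E; apply: ne; rewrite -E.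
  have bm2' : ((tnth b i).+2)%:R <= (m k i)%:R :> R by rewrite ler_nat.
  rewrite -!natr1 -addrA in bm2'.
  move: By; rewrite /Box PrV => /andP[_ y1].
  set u := (Pr k.+1)^-1 in y1 u0 *; nra.
have [a1 a2] := avg_bound key.
split => // yc; apply: avg_0 => b bB.
have Bz := Box_step By bB; case: (H _ Bz) => _ _; apply.
rewrite tnth_vadd tnth_sd.
have bm := digit_lt bB.
have bm' : ((tnth b i).+1)%:R <= (m k i)%:R :> R by rewrite ler_nat.
rewrite -natr1 in bm'.
have b0 : 0 <= (tnth b i)%:R :> R by [].
rewrite PrV in yc; set u := (Pr k.+1)^-1 in yc u0 *; nra.
Qed.

Lemma tail1 L t g M : 0 <= M ->
  (forall z, Box (L + t) z -> [/\ 0 <= g z, g z <= M &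
     (tnth z i <= 1 - (Pr L)^-1 - (Pr (L + t))^-1 -> g z = 0)]) ->
  fci (L + t) g <= M * \prod_(j < L) rho1 j.
Proof.
elim: t g => [|t IH] g M0 H.
  rewrite addn0; apply: head1 => // y By; rewrite addn0 in H.
  case: (H _ By) => g0 gM gz; split => // yc; apply: gz; lra.
rewrite addnS /=; apply: IH => // z Bz.
have u0 : 0 < (Pr (L + t).+1)^-1 by rewrite invr_gt0 Pr_gt0.
have key : forall b, b \in B (L + t) -> 0 <= g (vadd z (scaled_digit R m (L + t) b)) /\
   g (vadd z (scaled_digit R m (L + t) b)) <= M.
  move=> b bB; have Bz' := Box_step Bz bB; rewrite -addnS in Bz'.
  by case: (H _ Bz') => g0 gM _.
have [a1 a2] := avg_le (Bne (L + t)) key.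
split => // zc; apply: avg_0 => b bB.
have Bz' := Box_step Bz bB; rewrite -addnS in Bz'.
case: (H _ Bz') => _ _; apply.
rewrite tnth_vadd tnth_sd addnS.
have bm := digit_lt bB.
have bm' : ((tnth b i).+1)%:R <= (m (L + t) i)%:R :> R by rewrite ler_nat.
rewrite -natr1 in bm'.
have b0 : 0 <= (tnth b i)%:R :> R by [].
rewrite (PrV (L + t)) in zc; set u := (Pr (L + t).+1)^-1 in zc u0 *; nra.
Qed.

Lemma head0 k g M : 0 <= M ->
  (forall y, Box k y -> [/\ 0 <= g y, g y <= M & ((Pr k)^-1 <= tnth y i -> g y = 0)]) ->
  fci k g <= M * \prod_(j < k) rho0 j.
Proof.
elim: k g M => [|k IH] g M M0 H.
  by rewrite big_ord0 mulr1 /=; case: (H _ Box0).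
rewrite big_ord_recr /= mulrA mulrAC; apply: IH; first by rewrite mulr_ge0 // rho0_ge0.
move=> y By.
have u0 : 0 < (Pr k.+1)^-1 by rewrite invr_gt0 Pr_gt0.
have key : forall b, b \in B k -> 0 <= g (vadd y (scaled_digit R m k b)) /\
   g (vadd y (scaled_digit R m k b)) <= M * (tnth b i == 0%N)%:R.
  move=> b bB; have Bz := Box_step By bB; case: (H _ Bz) => g0 gM gz; split => //.
  case: eqP => [_|ne]; first by rewrite mulr1.
  rewrite mulr0 gz //; rewrite tnth_vadd tnth_sd.
  have b1 : (1 <= tnth b i)%N by rewrite lt0n; apply/eqP.
  have b1' : 1%:R <= (tnth b i)%:R :> R by rewrite ler_nat.
  move: By; rewrite /Box => /andP[y0 _].
  set u := (Pr k.+1)^-1 in u0 *; nra.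
have [a1 a2] := avg_bound key.
split => // yc; apply: avg_0 => b bB.
have Bz := Box_step By bB; case: (H _ Bz) => _ _; apply.
rewrite tnth_vadd tnth_sd.
have b0 : 0 <= (tnth b i)%:R :> R by [].
have m1 : 1 <= (m k i)%:R :> R by rewrite ler1n (leq_trans _ (m_ge2 k)).
rewrite PrV in yc; set u := (Pr k.+1)^-1 in yc u0 *; nra.
Qed.

Lemma tail0 L t g M : 0 <= M ->
  (forall z, Box (L + t) z -> [/\ 0 <= g z, g z <= M &
     ((Pr L)^-1 <= tnth z i -> g z = 0)]) ->
  fci (L + t) g <= M * \prod_(j < L) rho0 j.
Proof.
elim: t g => [|t IH] g M0 H.
  rewrite addn0; apply: head0 => // y By; rewrite addn0 in H.
  by case: (H _ By).
rewrite addnS /=; apply: IH => // z Bz.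
have key : forall b, b \in B (L + t) -> 0 <= g (vadd z (scaled_digit R m (L + t) b)) /\
   g (vadd z (scaled_digit R m (L + t) b)) <= M.
  move=> b bB; have Bz' := Box_step Bz bB; rewrite -addnS in Bz'.
  by case: (H _ Bz') => g0 gM _.
have [a1 a2] := avg_le (Bne (L + t)) key.
split => // zc; apply: avg_0 => b bB.
have Bz' := Box_step Bz bB; rewrite -addnS in Bz'.
case: (H _ Bz') => _ _; apply.
rewrite tnth_vadd tnth_sd.
have u0 : 0 <= (Pr (L + t).+1)^-1 by rewrite invr_ge0 ltW // Pr_gt0.
have b0 : 0 <= (tnth b i)%:R :> R by [].
rewrite (le_trans zc) // lerDl mulr_ge0 //.
Qed.

Lemma rho10 j : rho1 j * rho0 j <= 1 / 4.
Proof.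
rewrite /rho1 /rho0.
set q := count _ _; set p := count _ _; set s := size _.
have pq : (q + p <= s)%N.
  rewrite /q /p -count_predUI.
  rewrite (_ : count (predI _ _) _ = 0%N).
    by rewrite addn0 count_size.
  apply/eqP; rewrite -leqn0 leqNgt -has_count; apply/hasP => -[b _] /=.
  move=> /andP[/eqP E1 /eqP E2]; have := m_ge2 j.
  by rewrite -(prednK (ltnW (m_ge2 j))) -E1 E2.
have pq' : q%:R + p%:R <= s%:R :> R by rewrite -natrD ler_nat.
have q0 : 0 <= q%:R :> R by [].
have p0 : 0 <= p%:R :> R by [].
case: (posnP s) => [->|s0]; first by rewrite invr0 !mulr0.
have S0 : 0 < s%:R :> R by rewrite ltr0n.
rewrite mulrACA -invfM ler_pdivrMr ?mulr_gt0 //.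
have h1 : (q%:R + p%:R) * (q%:R + p%:R) <= s%:R * s%:R :> R.
  by apply: ler_pM => //; apply: addr_ge0.
have h2 : 0 <= (q%:R - p%:R) * (q%:R - p%:R) :> R by rewrite -expr2 sqr_ge0.
lra.
Qed.
End FCI.
Section Meas.
Variables (R : realType) (d : nat).

Lemma bnd_of (T : Type) (f : T -> R) M0 : (forall x, `|f x| <= M0) -> [bounded f x | x in setT].
Proof.
move=> H; exists M0; split; first exact: num_real.
by move=> M hM x _; exact: le_trans (H x) (ltW hM).
Qed.

Lemma meas_sum (I : Type) (r : seq I) (F : I -> d.-tuple R -> R) :
  (forall j, measurable_fun setT (F j)) ->
  measurable_fun setT (fun x => \sum_(j <- r) F j x).
Proof.
move=> H; elim: r => [|j r IH].
  by under eq_fun do rewrite big_nil; exact: measurable_cst.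
under eq_fun do rewrite big_cons.
exact: measurable_realfun.measurable_funD.
Qed.

Lemma meas_tnth (i : 'I_d) : measurable_fun setT (fun x : d.-tuple R => tnth x i).
Proof. exact: measurable_tnth. Qed.

Lemma meas_vdot (w : d.-tuple R) : measurable_fun setT (fun x : d.-tuple R => vdot w x).
Proof.
apply: meas_sum => i; apply: measurable_realfun.measurable_funM; first exact: measurable_cst.
exact: meas_tnth.
Qed.

Lemma meas_cos_aff (w : d.-tuple R) (a b : R) :
  measurable_fun setT (fun x : d.-tuple R => a * cos (2 * pi * vdot w x + b)).
Proof.
apply: measurable_realfun.measurable_funM; first exact: measurable_cst.
apply: (measurableT_comp (f := cos) (g := fun x => 2 * pi * vdot w x + b)).
  apply: measurable_realfun.continuous_measurable_fun; exact: continuous_cos.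
apply: measurable_realfun.measurable_funD; last exact: measurable_cst.
apply: measurable_realfun.measurable_funM; first exact: measurable_cst.
exact: meas_vdot.
Qed.

Lemma integ_of (nu : probability (d.-tuple R) R) (f : d.-tuple R -> R) M0 :
  measurable_fun setT f -> (forall x, `|f x| <= M0) ->
  nu.-integrable setT (EFin \o f).
Proof.
move=> mf bf; apply: measurable_bounded_integrable => //.
  apply: (le_lt_trans (probability_le1 nu measurableT)); exact: ltry.
exact: bnd_of bf.
Qed.
End Meas.

Section SClass.
Variables (R : realType) (d : nat) (nu : probability (d.-tuple R) R) (xi : d.-tuple R).
Hypothesis Hz : forall k : d.-tuple int, fourier_vanishes nu (vadd xi [tuple (tnth k i)%:~R | i < d]).

Definition kR (k : d.-tuple int) : d.-tuple R := [tuple (tnth k i)%:~R | i < d].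
Definition term (a b : R) (k : d.-tuple int) (x : d.-tuple R) : R :=
  a * cos (2 * pi * vdot (vadd xi (kR k)) x + b).

Lemma meas_sin_lin (w : d.-tuple R) :
  measurable_fun setT (fun x : d.-tuple R => sin (2 * pi * vdot w x)).
Proof.
apply: (measurableT_comp (f := sin) (g := fun x => 2 * pi * vdot w x)).
  apply: measurable_realfun.continuous_measurable_fun; exact: continuous_sin.
apply: measurable_realfun.measurable_funM; first exact: measurable_cst.
exact: meas_vdot.
Qed.

Lemma meas_cos_lin (w : d.-tuple R) :
  measurable_fun setT (fun x : d.-tuple R => cos (2 * pi * vdot w x)).
Proof.
apply: (measurableT_comp (f := cos) (g := fun x => 2 * pi * vdot w x)).
  apply: measurable_realfun.continuous_measurable_fun; exact: continuous_cos.
apply: measurable_realfun.measurable_funM; first exact: measurable_cst.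
exact: meas_vdot.
Qed.

Lemma term_meas a b k : measurable_fun setT (term a b k).
Proof. exact: meas_cos_aff. Qed.

Lemma term_bnd a b k x : `|term a b k x| <= `|a|.
Proof. by rewrite /term normrM ler_piMr // cos_max. Qed.

Lemma term_integrable a b k : nu.-integrable setT (EFin \o term a b k).
Proof. exact: integ_of (term_meas a b k) (term_bnd a b k). Qed.

Lemma term_int a b k : Rintegral nu setT (term a b k) = 0.
Proof.
set w := vadd xi (kR k).
have [Hc Hs] := Hz k.
rewrite (_ : term a b k = fun x => (a * cos b) * cos (2 * pi * vdot w x) -
                                   (a * sin b) * sin (2 * pi * vdot w x)); last first.
  by apply: funext => x; rewrite /term cosD; ring.
have ic : nu.-integrable setT (EFin \o fun x => (a * cos b) * cos (2 * pi * vdot w x)).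
  apply: (@integ_of R d nu _ (`|a * cos b|)).
    by apply: measurable_realfun.measurable_funM; [exact: measurable_cst|exact: meas_cos_lin].
  by move=> x; rewrite normrM ler_piMr // cos_max.
have is_ : nu.-integrable setT (EFin \o fun x => (a * sin b) * sin (2 * pi * vdot w x)).
  apply: (@integ_of R d nu _ (`|a * sin b|)).
    by apply: measurable_realfun.measurable_funM; [exact: measurable_cst|exact: meas_sin_lin].
  by move=> x; rewrite normrM ler_piMr // sin_max.
rewrite RintegralB //.
rewrite RintegralZl //; last first.
  apply: (@integ_of R d nu _ (1)); first exact: meas_cos_lin.
  by move=> x; exact: cos_max.
rewrite RintegralZl //; last first.
  apply: (@integ_of R d nu _ (1)); first exact: meas_sin_lin.
  by move=> x; exact: sin_max.
by rewrite Hc Hs !mulr0 subrr.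
Qed.

Definition IsS (f : d.-tuple R -> R) :=
  exists l : seq (R * R * d.-tuple int), f = fun x => \sum_(r <- l) term r.1.1 r.1.2 r.2 x.

Lemma IsS_int_aux (l : seq (R * R * d.-tuple int)) :
  nu.-integrable setT (EFin \o (fun x => \sum_(r <- l) term r.1.1 r.1.2 r.2 x)) /\
  Rintegral nu setT (fun x => \sum_(r <- l) term r.1.1 r.1.2 r.2 x) = 0.
Proof.
elim: l => [|r l [IH1 IH2]].
  under eq_fun do rewrite big_nil.
  split; first by apply: (@integ_of R d nu _ (0)); [exact: measurable_cst|move=> x; rewrite normr0].
  by rewrite Rintegral_cst // mul0r.
under eq_fun do rewrite big_cons.
split.
  exact: (integrableD measurableT (term_integrable _ _ _) IH1).
by rewrite RintegralD // ?term_int ?IH2 ?add0r //; exact: term_integrable.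
Qed.

Lemma IsS_int f : IsS f -> Rintegral nu setT f = 0 /\ nu.-integrable setT (EFin \o f).
Proof. by move=> [l ->]; have [] := IsS_int_aux l. Qed.

Lemma IsS_sum (I : Type) (r : seq I) (F : I -> d.-tuple R -> R) :
  (forall j, IsS (F j)) -> IsS (fun x => \sum_(j <- r) F j x).
Proof.
move=> H; elim: r => [|j r [l IH]].
  by exists [::]; apply: funext => x; rewrite !big_nil.
have [l1 E1] := H j.
exists (l1 ++ l); apply: funext => x; rewrite big_cons big_cat /=.
have IHx := congr1 (fun f => f x) IH; rewrite /= in IHx.
by rewrite E1 IHx.
Qed.

Lemma IsS_scale c f : IsS f -> IsS (fun x => c * f x).
Proof.
move=> [l ->]; exists [seq ((c * r.1.1, r.1.2), r.2) | r <- l].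
apply: funext => x; rewrite big_map mulr_sumr; apply: eq_bigr => r _.
by rewrite /term /= mulrA.
Qed.

Definition kadd (k : d.-tuple int) (i : 'I_d) (l : int) : d.-tuple int :=
  [tuple tnth k j + (if j == i then l else 0) | j < d].

Lemma vdot_kadd k i l x :
  vdot (vadd xi (kR (kadd k i l))) x = vdot (vadd xi (kR k)) x + l%:~R * tnth x i.
Proof.
rewrite /vdot (bigD1 i) //= [in RHS](bigD1 i) //=.
rewrite (eq_bigr (fun j => tnth (vadd xi (kR k)) j * tnth x j)); last first.
  by move=> j /negbTE ji; rewrite !tnth_mktuple ji addr0.
rewrite !tnth_mktuple eqxx rmorphD /=; ring.
Qed.

Lemma IsS_mulcos f i (l : int) g : IsS f ->
  IsS (fun x => f x * cos (2 * pi * l%:~R * tnth x i + g)).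
Proof.
move=> [L ->].
exists (flatten [seq [:: ((r.1.1 / 2, r.1.2 + g), kadd r.2 i l);
                        ((r.1.1 / 2, r.1.2 - g), kadd r.2 i (- l))] | r <- L]).
apply: funext => x; rewrite big_flatten /= big_map big_distrl /=; apply: eq_bigr => r _.
rewrite !big_cons big_nil addr0 /term !vdot_kadd /=.
set A := 2 * pi * vdot (vadd xi (kR r.2)) x.
set C := 2 * pi * l%:~R * tnth x i.
have -> : 2 * pi * (vdot (vadd xi (kR r.2)) x + l%:~R * tnth x i) + (r.1.2 + g) =
  (A + r.1.2) + (C + g) by rewrite /A /C; ring.
have -> : 2 * pi * (vdot (vadd xi (kR r.2)) x + (- l)%:~R * tnth x i) + (r.1.2 - g) =
  (A + r.1.2) - (C + g) by rewrite /A /C rmorphN /=; ring.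
rewrite [cos (A + r.1.2 + _)]cosD cosB; by field.
Qed.

Lemma IsS_base (t : d.-tuple R) :
  IsS (fun x => cos (2 * pi * \sum_(i < d) tnth xi i * (tnth t i - tnth x i))).
Proof.
exists [:: ((1, - (2 * pi * vdot xi t)), [tuple (0:int) | i < d])].
apply: funext => x; rewrite big_cons big_nil addr0 /term /= mul1r.
have -> : vdot (vadd xi (kR [tuple (0:int) | i < d])) x = vdot xi x.
  by apply: eq_bigr => i _; rewrite !tnth_mktuple addr0.
rewrite -cosN; congr cos.
rewrite /vdot (_ : \sum_(i < d) tnth xi i * (tnth t i - tnth x i) =
  \sum_(i < d) tnth xi i * tnth t i - \sum_(i < d) tnth xi i * tnth x i); first by ring.
by rewrite -sumrB; apply: eq_bigr => i _; ring.
Qed.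
End SClass.
Section Comb.
Variable R : realType.

Lemma bernoulli (n : nat) (U : 'I_n -> R) (e : R) :
  0 <= e -> (forall i, 1 - e <= U i /\ U i <= 1 /\ 0 <= U i) ->
  1 - n%:R * e <= \prod_(i < n) U i /\ \prod_(i < n) U i <= 1 /\ 0 <= \prod_(i < n) U i.
Proof.
move=> e0; elim: n U => [|n IH] U HU.
  by rewrite big_ord0 mul0r subr0 lexx ler01.
rewrite big_ord_recr /=.
have [h1 [h2 h3]] := IH (fun i => U (widen_ord (leqnSn n) i)) (fun i => HU _).
have [u1 [u2 u3]] := HU ord_max.
set P := \prod_(i < n) _ in h1 h2 h3 *.
split; last split.
- rewrite -natr1; nra.
- by rewrite mulr_ile1.
- exact: mulr_ge0.
Qed.

Lemma comb_bound (n M : nat) (w : 'I_n -> 'I_M -> R) (far : 'I_n -> 'I_M -> bool)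
  (c : {ffun 'I_n -> 'I_M} -> R) (e1 e2 : R) :
  0 <= e1 <= 1 -> 0 <= e2 ->
  (forall i s, 0 <= w i s) -> (forall i, \sum_(s < M) w i s = 1) ->
  (forall i, \sum_(s < M | far i s) w i s <= e2) ->
  (forall f, -1 <= c f) -> (forall f : {ffun 'I_n -> 'I_M}, (forall i, ~~ far i (f i)) -> 1 - e1 <= c f) ->
  1 - e1 - 2 * n%:R * e2 <= \sum_(f : {ffun 'I_n -> 'I_M}) (\prod_(i < n) w i (f i)) * c f.
Proof.
move=> /andP[e10 e11] e20 w0 w1 wf c1 cn.
set H := fun i s => w i s * (~~ far i s)%:R.
have step : forall f : {ffun 'I_n -> 'I_M},
    (2 - e1) * \prod_(i < n) H i (f i) - \prod_(i < n) w i (f i) <=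
    (\prod_(i < n) w i (f i)) * c f.
  move=> f; have W0 : 0 <= \prod_(i < n) w i (f i) by apply: prodr_ge0.
  case: (boolP [forall i, ~~ far i (f i)]) => [/forallP allnear|].
    have -> : \prod_(i < n) H i (f i) = \prod_(i < n) w i (f i).
      by apply: eq_bigr => i _; rewrite /H allnear mulr1.
    have := cn f allnear; nra.
  rewrite negb_forall => /existsP [i0]; rewrite negbK => fi0.
  have -> : \prod_(i < n) H i (f i) = 0.
    by rewrite (bigD1 i0) //= /H fi0 mulr0 mul0r.
  have := c1 f; nra.
have S : \sum_(f : {ffun 'I_n -> 'I_M}) ((2 - e1) * \prod_(i < n) H i (f i) - \prod_(i < n) w i (f i))
   <= \sum_(f : {ffun 'I_n -> 'I_M}) (\prod_(i < n) w i (f i)) * c f.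
  by apply: ler_sum => f _; exact: step.
move: S; rewrite sumrB -mulr_sumr -!bigA_distr_bigA /=.
have -> : \prod_(i < n) \sum_(j < M) w i j = 1 by rewrite big1 // => i _; exact: w1.
set U := fun i => \sum_(j < M) H i j.
have HU : forall i, 1 - e2 <= U i /\ U i <= 1 /\ 0 <= U i.
  move=> i; have := w1 i; rewrite (bigID (far i)) /= => E.
  have -> : U i = \sum_(s < M | ~~ far i s) w i s.
    rewrite /U (bigID (far i)) /= big1 ?add0r; last by move=> s fs; rewrite /H fs mulr0.
    by apply: eq_bigr => s fs; rewrite /H fs mulr1.
  have := wf i; have : 0 <= \sum_(s < M | far i s) w i s by apply: sumr_ge0.
  have : 0 <= \sum_(s < M | ~~ far i s) w i s by apply: sumr_ge0.
  lra.
have [b1 [b2 b3]] := bernoulli e20 HU.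
rewrite -/U; move=> S.
apply: le_trans S.
have : 0 <= n%:R * e2 by apply: mulr_ge0.
nra.
Qed.
End Comb.
Section Kernel.
Variables (R : realType) (d : nat) (xi : d.-tuple R) (K : nat) (a : 'I_d -> R).

Definition cG : R := ((K.+1)%:R * (K.+1)%:R)^-1.
Definition G (y : R) : R :=
  cG * \sum_(j < K.+1) \sum_(j' < K.+1) cos ((j%:R - j'%:R) * (2 * pi * y)).
Definition tpos (i : 'I_d) (s : 'I_K.+1) : R := a i + s%:R / (K.+1)%:R.
Definition Phi (x : d.-tuple R) : R :=
  \sum_(f : {ffun 'I_d -> 'I_K.+1})
     (\prod_(i < d) G (tnth x i - tpos i (f i))) *
     cos (2 * pi * \sum_(i < d) tnth xi i * (tpos i (f i) - tnth x i)).

Lemma sum_ord_cst n (c : R) : \sum_(i < n) c = c * n%:R.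
Proof.
elim: n => [|n IH]; first by rewrite big_ord0 mulr0.
by rewrite big_ord_recr /= IH -natr1 mulrDr mulr1.
Qed.

Lemma cG_gt0 : 0 < cG.
Proof. by rewrite /cG invr_gt0 mulr_gt0 // ltr0n. Qed.

Lemma G_ge0 y : 0 <= G y.
Proof.
rewrite /G dsum_cos mulr_ge0 ?addr_ge0 ?sqr_ge0 //; exact: ltW cG_gt0.
Qed.

Lemma G_alias y i : \sum_(s < K.+1) G (y - tpos i s) = 1.
Proof.
have M0 : (K.+1)%:R != 0 :> R by rewrite pnatr_eq0.
rewrite /G -mulr_sumr.
rewrite (eq_bigr (fun s : 'I_K.+1 => \sum_(j < K.+1) \sum_(j' < K.+1)
   cos ((j%:R - j'%:R) * (2 * pi * (y - a i)) + s%:R * (2 * (- (pi * (j%:R - j'%:R) / (K.+1)%:R)))))); last first.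
  move=> s _; apply: eq_bigr => j _; apply: eq_bigr => j' _; congr cos.
  by rewrite /tpos; field.
rewrite exchange_big /=.
rewrite (eq_bigr (fun j : 'I_K.+1 => (K.+1)%:R)); last first.
  move=> j _; rewrite exchange_big /= (bigD1 j) //=.
  rewrite [X in _ + X]big1 ?addr0.
    rewrite (eq_bigr (fun=> 1)); last by move=> s _; rewrite -[RHS]cos0; congr cos; ring.
    by rewrite sum_ord_cst mul1r.
  move=> j' jj'; apply: alias_cos => //; by rewrite eq_sym.
by rewrite sum_ord_cst /cG mulVf // mulf_neq0.
Qed.

Lemma G_far y eta : 0 < eta <= 1/2 -> eta <= `|y| -> `|y| <= 1 - eta ->
  G y <= cG * 2 / (1 - cos (2 * pi * eta)).
Proof.
move=> /andP[e0 e2] ey ye.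
have c0 := one_cos_gt0 (eta := eta) (R := R); rewrite e0 e2 in c0; have {}c0 := c0 isT.
have cf := cos_far e0 ey ye.
have kb := ker_bound K (2 * pi * y).
rewrite /G dsum_cos -[cG * 2 / _]mulrA ler_pM2l ?cG_gt0 // ler_pdivlMr //.
set Q := _ + _ in kb *.
have Q0 : 0 <= Q by rewrite addr_ge0 ?sqr_ge0.
nra.
Qed.
Lemma IsS_mulG f i c : IsS xi f -> IsS xi (fun x => f x * G (tnth x i - c)).
Proof.
move=> Sf.
have -> : (fun x => f x * G (tnth x i - c)) =
  (fun x => \sum_(j < K.+1) \sum_(j' < K.+1) cG * (f x *
     cos (2 * pi * ((j%:Z - j'%:Z)%:~R) * tnth x i + (- (2 * pi * (j%:R - j'%:R) * c))))).
  apply: funext => x; rewrite /G mulrCA !mulr_sumr.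
  apply: eq_bigr => j _; rewrite !mulr_sumr; apply: eq_bigr => j' _.
  by rewrite intrB -!pmulrn; congr (_ * (_ * cos _)); ring.
apply: IsS_sum => j; apply: IsS_sum => j'; apply: IsS_scale; exact: IsS_mulcos.
Qed.

Lemma IsS_prodG (r : seq 'I_d) (c : 'I_d -> R) base : IsS xi base ->
  IsS xi (fun x => base x * \prod_(i <- r) G (tnth x i - c i)).
Proof.
move=> Sb; elim: r => [|i r IH].
  by under eq_fun do rewrite big_nil mulr1.
have -> : (fun x => base x * \prod_(j <- i :: r) G (tnth x j - c j)) =
  (fun x => (base x * \prod_(j <- r) G (tnth x j - c j)) * G (tnth x i - c i)).
  by apply: funext => x; rewrite big_cons; ring.
exact: IsS_mulG.
Qed.

Lemma Phi_IsS : IsS xi Phi.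
Proof.
rewrite /Phi; apply: IsS_sum => f.
have -> : (fun x => (\prod_(i < d) G (tnth x i - tpos i (f i))) *
     cos (2 * pi * \sum_(i < d) tnth xi i * (tpos i (f i) - tnth x i))) =
  (fun x => cos (2 * pi * \sum_(i < d) tnth xi i * (tnth [tuple tpos j (f j) | j < d] i - tnth x i))
            * \prod_(i < d) G (tnth x i - tpos i (f i))).
  apply: funext => x; rewrite [LHS]mulrC; congr (cos (_ * _) * _).
  by apply: eq_bigr => i _; rewrite tnth_mktuple.
exact: IsS_prodG (IsS_base _ _).
Qed.
End Kernel.
Section Psi.
Variable R : realType.

Definition ramp (u : R) := Num.max 0 u.

Lemma ramp_ge0 u : 0 <= ramp u. Proof. by rewrite /ramp le_max lexx. Qed.

Lemma ramp_lip u v : `|ramp u - ramp v| <= `|u - v|.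
Proof.
have h1 := ler_norm (u - v).
have h2 : - (u - v) <= `|u - v| by rewrite -normrN ler_norm.
rewrite ler_norml /ramp.
by case: (lerP 0 u) => hu; case: (lerP 0 v) => hv; apply/andP; split; lra.
Qed.

Lemma min1_lip u v : `|Num.min 1 u - Num.min 1 v| <= `|u - v| :> R.
Proof.
have h1 := ler_norm (u - v).
have h2 : - (u - v) <= `|u - v| by rewrite -normrN ler_norm.
rewrite ler_norml.
by case: (lerP 1 u) => hu; case: (lerP 1 v) => hv; apply/andP; split; lra.
Qed.

Definition psi (c eta t : R) : R :=
  Num.min 1 (ramp ((c + 4 * eta - t) / (4 * eta)) + ramp ((t - (c + 1 - 8 * eta)) / (4 * eta))).

Lemma psi_ge0 c eta t : 0 <= psi c eta t.
Proof. by rewrite /psi le_min ler01 addr_ge0 ?ramp_ge0. Qed.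

Lemma psi_le1 c eta t : psi c eta t <= 1.
Proof. by rewrite /psi ge_min lexx. Qed.

Lemma psi_lip c eta s t : 0 < eta -> `|psi c eta s - psi c eta t| <= `|s - t| / (2 * eta).
Proof.
move=> e0; apply: le_trans (min1_lip _ _) _.
set u1 := (c + 4 * eta - s) / (4 * eta); set v1 := (c + 4 * eta - t) / (4 * eta).
set u2 := (s - (c + 1 - 8 * eta)) / (4 * eta); set v2 := (t - (c + 1 - 8 * eta)) / (4 * eta).
have -> : ramp u1 + ramp u2 - (ramp v1 + ramp v2) = (ramp u1 - ramp v1) + (ramp u2 - ramp v2) by ring.
apply: le_trans (ler_normD _ _) _.
have e1 : `|u1 - v1| = `|s - t| / (4 * eta).
  rewrite /u1 /v1 -mulrBl normrM (ger0_norm (x := (4 * eta)^-1)); last by rewrite invr_ge0 mulr_ge0 // ltW.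
  by rewrite -normrN; congr (`|_| * _); ring.
have e2 : `|u2 - v2| = `|s - t| / (4 * eta).
  rewrite /u2 /v2 -mulrBl normrM (ger0_norm (x := (4 * eta)^-1)); last by rewrite invr_ge0 mulr_ge0 // ltW.
  by congr (`|_| * _); ring.
have := ramp_lip u1 v1; have := ramp_lip u2 v2; rewrite e1 e2.
have -> : `|s - t| / (2 * eta) = `|s - t| / (4 * eta) + `|s - t| / (4 * eta).
  by field; rewrite gt_eqF.
lra.
Qed.

Lemma psi_out c eta t : 0 < eta -> eta <= 1/16 -> (t < c \/ c + 1 - 4 * eta < t) -> psi c eta t = 1.
Proof.
move=> e0 e1 ht; apply/min_l.
have e4 : 0 < 4 * eta by rewrite mulr_gt0.
case: ht => ht.
  have : 1 <= ramp ((c + 4 * eta - t) / (4 * eta)).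
    rewrite /ramp le_max; apply/orP; right; rewrite ler_pdivlMr //; lra.
  have := ramp_ge0 ((t - (c + 1 - 8 * eta)) / (4 * eta)); lra.
have : 1 <= ramp ((t - (c + 1 - 8 * eta)) / (4 * eta)).
  rewrite /ramp le_max; apply/orP; right; rewrite ler_pdivlMr //; lra.
have := ramp_ge0 ((c + 4 * eta - t) / (4 * eta)); lra.
Qed.

Lemma psi_zero c eta t : 0 < eta -> c + 4 * eta <= t -> t <= c + 1 - 8 * eta -> psi c eta t = 0.
Proof.
move=> e0 h1 h2.
have e4 : 0 < 4 * eta by rewrite mulr_gt0.
rewrite /psi /ramp (max_l (x := 0)); last by rewrite pmulr_lle0 ?invr_gt0 //; lra.
rewrite (max_l (x := 0)); last by rewrite pmulr_lle0 ?invr_gt0 //; lra.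
by rewrite addr0 (min_r ler01).
Qed.

Lemma psi_meas c eta : measurable_fun setT (psi c eta).
Proof.
apply: measurable_realfun.measurable_minr; first exact: measurable_cst.
apply: measurable_realfun.measurable_funD.
  apply: measurable_realfun.measurable_maxr; first exact: measurable_cst.
  apply: measurable_realfun.measurable_funM; last exact: measurable_cst.
  apply: measurable_realfun.measurable_funB; first exact: measurable_cst.
  exact: measurable_id.
apply: measurable_realfun.measurable_maxr; first exact: measurable_cst.
apply: measurable_realfun.measurable_funM; last exact: measurable_cst.
apply: measurable_realfun.measurable_funB; first exact: measurable_id.
exact: measurable_cst.
Qed.
End Psi.
Section Main.
Variables (R : realType) (d : nat) (m : nat -> 'I_d -> nat)
  (B : nat -> seq (d.-tuple nat)) (nu : probability (d.-tuple R) R).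
Hypothesis HD : forall n, in_Dd (m n) (B n).
Hypothesis Hconv : is_infinite_convolution m B nu.
Variable xi : d.-tuple R.
Hypothesis Hz : forall k : d.-tuple int, fourier_vanishes nu (vadd xi [tuple (tnth k i)%:~R | i < d]).

Lemma cos_near u : `|u| <= 1 -> cos 1 <= cos u :> R.
Proof.
move=> u1; rewrite -[cos u]cos_norm.
have p2 := pi_ge2 R.
move: u1; rewrite le_eqVlt => /orP[/eqP->|lt]; first by [].
apply: ltW; rewrite ltr_cos //.
- by rewrite in_itv /= normr_ge0 /=; lra.
- by rewrite in_itv /= ler01 /=; lra.
Qed.

Lemma cos1_le1 : cos 1 <= 1 :> R. Proof. exact: cos_le1. Qed.

Lemma geom_small (e : R) : 0 < e -> exists L : nat, (1/4) ^+ L <= e.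
Proof.
move=> e0.
have ie : 0 <= e^-1 by rewrite invr_ge0 ltW.
set N := Num.Def.archi_bound e^-1.
have hN := archi_boundP ie; rewrite -/N in hN.
exists N.
have N0 : 0 < N%:R :> R by apply: le_lt_trans hN.
have h4 : N%:R < 4%:R ^+ N :> R by rewrite -natrX ltr_nat ltn_expl.
rewrite expr_div_n expr1n mul1r -[e]invrK lef_pV2 ?posrE ?invr_gt0 ?exprn_gt0 //.
exact: ltW (lt_trans hN h4).
Qed.

Lemma Rint_cst (r : R) : Rintegral nu setT (fun _ => r) = r.
Proof.
rewrite Rintegral_cst // (_ : fine _ = 1) ?mulr1 //.
exact: (congr1 fine (probability_setT nu)).
Qed.

Lemma Pr_ge1 i k : 1 <= Pr R m i k.
Proof.
elim: k => [|k IH]; first by rewrite /Pr big_ord0.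
rewrite (PrS R m i k) -[X in X <= _]mulr1; apply: ler_pM => //.
by rewrite ler1n (leq_trans _ (m_ge2 HD i k)).
Qed.

Lemma sum_ge_term (F : 'I_d -> R) i : (forall j, 0 <= F j) -> F i <= \sum_(j < d) F j.
Proof.
move=> F0; rewrite (bigD1 i) //= lerDl; exact: sumr_ge0.
Qed.

Lemma prod_ord_cst n (c : R) : \prod_(i < n) c = c ^+ n.
Proof.
elim: n => [|n IH]; first by rewrite big_ord0 expr0.
by rewrite big_ord_recr /= IH exprS mulrC.
Qed.

Lemma main_false : False.
Proof.
have c1 := cos1_gt0 R.
have c1' := cos1_le1.
pose eps : R := cos 1 / (8 * (d.+1)%:R).
have eps0 : 0 < eps by rewrite /eps divr_gt0 // mulr_gt0 // ltr0n.
have epsd : 4 * d%:R * eps <= cos 1 / 2.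
  rewrite /eps mulrA ler_pdivrMr ?mulr_gt0 ?ltr0n // -natr1.
  have : 0 <= d%:R :> R by []. nra.
have [L HL] := geom_small (mulr_gt0 eps0 eps0).
pose p1 i := \prod_(j < L) rho1 R m B i j.
pose p0 i := \prod_(j < L) rho0 R B i j.
pose face i := p1 i <= eps.
have face0 : forall i, ~~ face i -> p0 i <= eps.
  move=> i; rewrite /face -ltNge => lt1; rewrite leNgt; apply/negP => lt0.
  have h : p1 i * p0 i <= (1/4) ^+ L.
    rewrite /p1 /p0 -big_split /= -prod_ord_cst; apply: ler_prod => j _.
    by rewrite mulr_ge0 ?rho1_ge0 ?rho0_ge0 // rho10.
  have : eps * eps < p1 i * p0 i by apply: ltr_pM => //; exact: ltW.
  lra.
pose Del i := (Pr R m i L)^-1.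
have Del0 : forall i, 0 < Del i by move=> i; rewrite invr_gt0 (@Pr_gt0 R d m B HD).
have Del1 : forall i, Del i <= 1 by move=> i; rewrite invf_le1 ?(@Pr_gt0 R d m B HD) // Pr_ge1.
pose S := \sum_(i < d) `|tnth xi i|.
have S0 : 0 <= S by apply: sumr_ge0 => i _.
have pi0 := pi_gt0 R.
pose th := (2 * pi * (S + 1))^-1.
have th0 : 0 < th by rewrite invr_gt0 mulr_gt0 ?mulr_gt0 //; lra.
have thS : 2 * pi * (S * th) <= 1.
  have -> : 2 * pi * (S * th) = S / (S + 1).
    rewrite /th; field; apply/andP; split; rewrite gt_eqF //; lra.
  rewrite ler_pdivrMr; lra.
pose eta i := Num.min (Del i / 16) th.
have eta0 : forall i, 0 < eta i by move=> i; rewrite lt_min th0 andbT divr_gt0.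
have etaD : forall i, 16 * eta i <= Del i.
  move=> i; have : eta i <= Del i / 16 by rewrite ge_min lexx.
  rewrite ler_pdivlMr // mulrC //.
have etath : forall i, eta i <= th by move=> i; rewrite ge_min lexx orbT.
have eta16 : forall i, eta i <= 1 / 16.
  move=> i; have := etaD i; have := Del1 i; lra.
pose c i := if face i then - (8 * eta i) else 8 * eta i.
pose a i := c i - 2 * eta i.
pose Psi x := \sum_(i < d) psi (c i) (eta i) (tnth x i).
pose Kb := \sum_(i < d) 2 / (eps * (1 - cos (2 * pi * eta i))).
have oc : forall i, 0 < 1 - cos (2 * pi * eta i).
  move=> i; apply: one_cos_gt0; rewrite eta0 /=; have := eta16 i; lra.
have Kb0 : 0 <= Kb by apply: sumr_ge0 => i _; rewrite divr_ge0 // mulr_ge0 // ltW.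
pose K := Num.Def.archi_bound Kb.
have hK := archi_boundP Kb0; rewrite -/K in hK.
pose Phi0 := Phi xi K a.
have PsiB : forall x, 0 <= Psi x <= d%:R.
  move=> x; apply/andP; split; first by apply: sumr_ge0 => i _; exact: psi_ge0.
  rewrite -[d%:R]mul1r -sum_ord_cst; apply: ler_sum => i _; exact: psi_le1.
have Psimeas : measurable_fun setT Psi.
  apply: meas_sum => i; apply: (measurableT_comp (psi_meas _ _)); exact: meas_tnth.
have Psicont : continuous_Rd Psi.
  move=> x e e0.
  pose Lam := \sum_(i < d) (2 * eta i)^-1.
  have Lam0 : 0 <= Lam by apply: sumr_ge0 => i _; rewrite invr_ge0 mulr_ge0 // ltW.
  pose del := e / (Lam + 1).
  have del0 : 0 < del by rewrite divr_gt0 //; lra.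
  exists del => // y hy.
  rewrite /Psi -sumrB; apply: le_lt_trans (ler_norm_sum _ _ _) _.
  apply: (le_lt_trans (y := \sum_(i < d) del * (2 * eta i)^-1)).
    apply: ler_sum => i _.
    have h := @psi_lip R (c i) (eta i) (tnth x i) (tnth y i) (eta0 i).
    apply: (le_trans h).
    by rewrite ler_pM2r ?invr_gt0 ?mulr_gt0 // ltW.
  rewrite -mulr_sumr -/Lam.
  have -> : e = del * (Lam + 1) by rewrite /del divfK // gt_eqF //; lra.
  by rewrite ltr_pM2l //; lra.
have ev : forall n, (L <= n)%N -> fin_conv_integral m B n Psi <= d%:R * eps.
  move=> n Ln; rewrite /Psi (fci_sum m B (index_enum 'I_d) n (fun i x => psi (c i) (eta i) (tnth x i))).
  apply: (le_trans (y := \sum_(i < d) eps)); last by rewrite sum_ord_cst mulrC.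
  apply: ler_sum => i _; rewrite -(subnKC Ln).
  have Pp : 0 <= (Pr R m i (L + (n - L)))^-1 by rewrite invr_ge0 ltW // (@Pr_gt0 R d m B HD).
  case fi : (face i).
    apply: le_trans (@tail1 R d m B HD i L (n - L) (fun x => psi (c i) (eta i) (tnth x i)) 1 ler01 _) _; last first.
      by rewrite mul1r.
    move=> z; rewrite /Box => /andP[z0 z1]; split; [exact: psi_ge0|exact: psi_le1|move=> zc].
    apply: psi_zero; first exact: eta0.
      by rewrite /c fi; have := eta0 i; lra.
    rewrite /c fi; have := etaD i; rewrite -/(Del i) in zc; lra.
  apply: le_trans (@tail0 R d m B HD i L (n - L) (fun x => psi (c i) (eta i) (tnth x i)) 1 ler01 _) _; last first.
    by rewrite mul1r; apply: face0; rewrite fi.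
  move=> z; rewrite /Box => /andP[z0 z1]; split; [exact: psi_ge0|exact: psi_le1|move=> zc].
  apply: psi_zero; first exact: eta0.
    by rewrite /c fi; have := etaD i; rewrite -/(Del i) in zc; lra.
  by rewrite /c fi; lra.
have intPsi : Rintegral nu setT Psi <= d%:R * eps.
  have bPsi : bounded_Rd Psi.
    by exists d%:R => x; have /andP[h1 h2] := PsiB x; rewrite ger0_norm.
  have cv := Hconv Psimeas Psicont bPsi.
  have nr : \forall n \near \oo, fin_conv_integral m B n Psi <= d%:R * eps.
    by exists L => // n /= Ln; exact: ev.
  rewrite -(cvg_lim (@Rhausdorff R) cv); apply: limr_le => //; exact: cvgP cv.
have Kfar : forall i, (K.+1)%:R * (cG R K * 2 / (1 - cos (2 * pi * eta i))) <= eps.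
  move=> i.
  have k0 : 0 < (K.+1)%:R :> R by rewrite ltr0n.
  have hi : 2 / (eps * (1 - cos (2 * pi * eta i))) <= Kb.
    have := @sum_ge_term (fun j => 2 / (eps * (1 - cos (2 * pi * eta j)))) i.
    by apply => j; rewrite divr_ge0 // mulr_ge0 ?ltW ?oc.
  have hk : K%:R <= (K.+1)%:R :> R by rewrite ler_nat.
  have h2 : 2 / (eps * (1 - cos (2 * pi * eta i))) <= (K.+1)%:R.
    by apply: (le_trans hi); apply: ltW; apply: (lt_le_trans hK).
  rewrite ler_pdivrMr ?mulr_gt0 // in h2.
  have -> : (K.+1)%:R * (cG R K * 2 / (1 - cos (2 * pi * eta i))) =
            2 / ((1 - cos (2 * pi * eta i)) * (K.+1)%:R).
    by rewrite /cG; field; apply/andP; split; rewrite gt_eqF.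
  rewrite ler_pdivrMr ?mulr_gt0 //; have := oc i; nra.
have F4 : forall x, cos 1 - 2 * d%:R * eps - 2 * Psi x <= Phi0 x.
  move=> x.
  have Psi0 : 0 <= Psi x by case/andP: (PsiB x).
  have d0 : 0 <= d%:R * eps by rewrite mulr_ge0 // ltW.
  case: (boolP [forall i, (c i <= tnth x i) && (tnth x i <= c i + 1 - 4 * eta i)]) => [/forallP win|].
    have cb : 1 - (1 - cos 1) - 2 * d%:R * eps <= Phi0 x.
      apply: (@comb_bound R d K.+1 (fun i s => G K (tnth x i - tpos a i s))
                (fun i s => eta i < `|tnth x i - tpos a i s|)
                (fun f => cos (2 * pi * \sum_(i < d) tnth xi i * (tpos a i (f i) - tnth x i)))
                (1 - cos 1) eps).
      - by apply/andP; split; lra.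
      - exact: ltW.
      - by move=> i s; exact: G_ge0.
      - by move=> i; exact: G_alias.
      - move=> i; have /andP[w1 w2] := win i.
        set C := cG R K * 2 / (1 - cos (2 * pi * eta i)).
        have C0 : 0 <= C by rewrite /C divr_ge0 ?mulr_ge0 ?ltW ?cG_gt0 ?oc.
        apply: (le_trans (y := \sum_(s < K.+1 | eta i < `|tnth x i - tpos a i s|) C)).
          apply: ler_sum => s fs; apply: G_far.
          + by rewrite eta0 /=; have := eta16 i; lra.
          + exact: ltW.
          + have s0 : 0 <= s%:R / (K.+1)%:R :> R by rewrite divr_ge0.
            have s1 : s%:R / (K.+1)%:R < 1 :> R by rewrite ltr_pdivrMr ?ltr0n // mul1r ltr_nat.
            rewrite /tpos /a; move: (eta0 i) w1 w2 s0 s1; generalize (c i) (eta i) (tnth x i) (s%:R / (K.+1)%:R : R) => Ci Ei Xi Si e0i h1 h2 h3 h4; rewrite ler_norml; apply/andP; split; lra.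
        apply: (le_trans (y := \sum_(s < K.+1) C)).
          by rewrite [X in _ <= X](bigID (fun s => eta i < `|tnth x i - tpos a i s|)) /= lerDl sumr_ge0.
        by rewrite sum_ord_cst mulrC; exact: Kfar.
      - by move=> f; exact: cos_geN1.
      - move=> f nf; rewrite (_ : 1 - (1 - cos 1) = cos 1); last by ring.
        apply: cos_near.
        rewrite normrM (ger0_norm (x := 2 * pi)); last by rewrite mulr_ge0 // pi_ge0.
        apply: (le_trans _ thS); rewrite ler_pM2l ?mulr_gt0 //.
        apply: le_trans (ler_norm_sum _ _ _) _.
        rewrite /S mulr_suml; apply: ler_sum => i _.
        rewrite normrM ler_wpM2l //.
        have := nf i; rewrite -leNgt distrC => h; apply: le_trans h (etath i).
    have := cb; lra.
  rewrite negb_forall => /existsP [i]; rewrite negb_and -!ltNge => hi.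
  have ps1 : psi (c i) (eta i) (tnth x i) = 1.
    apply: psi_out => //; case/orP: hi => h; [left|right] => //.
  have P1 : 1 <= Psi x.
    rewrite -ps1 /Psi; have := @sum_ge_term (fun j => psi (c j) (eta j) (tnth x j)) i.
    by apply => j; exact: psi_ge0.
  have PhiN : -1 <= Phi0 x.
    rewrite /Phi0 /Phi.
    apply: (le_trans (y := \sum_(f : {ffun 'I_d -> 'I_K.+1}) - \prod_(i < d) G K (tnth x i - tpos a i (f i)))).
      rewrite sumrN -(bigA_distr_bigA (fun i s => G K (tnth x i - tpos a i s))) /=.
      by rewrite big1 // => j _; exact: G_alias.
    apply: ler_sum => f _.
    have W0 : 0 <= \prod_(i < d) G K (tnth x i - tpos a i (f i)) by apply: prodr_ge0 => j _; exact: G_ge0.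
    have := cos_geN1 (2 * pi * \sum_(i < d) tnth xi i * (tpos a i (f i) - tnth x i)); nra.
  lra.
have [IPhi intPhi] := IsS_int Hz (Phi_IsS xi K a).
have intPsi' : nu.-integrable setT (EFin \o Psi).
  apply: (@integ_of R d nu _ d%:R) => // x; have := PsiB x.
  by case/andP => h1 h2; rewrite ger0_norm.
have int2Psi : nu.-integrable setT (EFin \o (fun x => 2 * Psi x)).
  apply: (@integ_of R d nu _ (2 * d%:R)).
    by apply: measurable_realfun.measurable_funM => //; exact: measurable_cst.
  move=> x; have /andP[h1 h2] := PsiB x; rewrite ger0_norm ?mulr_ge0 //; lra.
have intC : nu.-integrable setT (EFin \o (fun=> cos 1 - 2 * d%:R * eps)).
  by apply: (@integ_of R d nu _ `|cos 1 - 2 * d%:R * eps|) => //; exact: measurable_cst.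
have hint : nu.-integrable setT (EFin \o (fun x => cos 1 - 2 * d%:R * eps - 2 * Psi x)).
  exact: (integrableB measurableT intC int2Psi).
have := le_Rintegral measurableT hint intPhi (fun x _ => F4 x).
rewrite IPhi RintegralB // Rint_cst RintegralZl //.
lra.
Qed.
End Main.

Unset Implicit Arguments.

Theorem corollary4p3 (R : realType) (d : nat) (m : nat -> 'I_d -> nat)
  (B : nat -> seq (d.-tuple nat)) (nu : probability (d.-tuple R) R) :
  (forall n, in_Dd (m n) (B n)) ->
  is_infinite_convolution m B nu ->
  Zset nu = set0.
Proof.
move=> HD Hconv; apply/seteqP; split => // xi Hz.
exact: (@main_false R d m B nu HD Hconv xi Hz).
Qed.
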